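(* Consider a firm with managers $i=1,\dots,n$, each with skill $s_i\in(0,1]$, and parameters $A>0$, $\alpha\in(0,1)$, $c_0>0$, $\gamma>0$, $\beta\ge 0$. Fix a worker allocation: manager $i$ supervises a team of $n_i\ge 0$ workers, the workers $j$ having skills $q_j>0$, and let $Q_i=\sum_{j\in\text{team}_i} q_j$; assume at least one team is nonempty. For agent capital $K_A\ge 0$ define $$c_i(K_A)=\frac{c_0}{1+\gamma K_A s_i^{\beta}},\qquad L_{\text{eff},i}(K_A)=\frac{Q_i}{1+c_i(K_A)\,n_i},\qquad Y_i(K_A)=A\,L_{\text{eff},i}(K_A)^{\alpha},\qquad Y(K_A)=\sum_{i=1}^n Y_i(K_A).$$ Then, holding the team allocations $\{n_i,\text{team}_i\}$ fixed, $\partial Y/\partial K_A>0$ for all $K_A\ge 0$, i.e. output is strictly increasing in $K_A$.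
   Context: $K_A$ (''agent capital'') is a nonnegative real number representing AI capability that reduces coordination costs; $c_i(K_A)$ is manager $i$'s per-worker coordination cost, $L_{\text{eff},i}$ is the effective labor of team $i$, and $Y_i$ is team $i$'s output (each team has exactly one manager). *)

(* Defs.v *)
From mathcomp Require Import all_boot all_order all_algebra.
From mathcomp Require Import all_classical all_reals all_analysis.
Set Implicit Arguments. Unset Strict Implicit. Unset Printing Implicit Defensive.
Import Order.TTheory GRing.Theory Num.Theory.
Local Open Scope ring_scope.

Section Model.
Variable R : realType.

Definition coord_cost (c0 gamma beta si KA : R) : R :=
  c0 / (1 + gamma * KA * si `^ beta).

(* team_i is the list of skills q_j of the workers supervised by manager i;
   n_i = size team_i, Q_i = sum of the skills. *)
Definition team_size (team : seq R) : R := (size team)%:R.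
Definition team_skill (team : seq R) : R := \sum_(q <- team) q.

Definition eff_labor (c0 gamma beta si : R) (team : seq R) (KA : R) : R :=
  team_skill team / (1 + coord_cost c0 gamma beta si KA * team_size team).

Definition team_output (A alpha c0 gamma beta si : R) (team : seq R) (KA : R) : R :=
  A * eff_labor c0 gamma beta si team KA `^ alpha.

Definition firm_output (n : nat) (A alpha c0 gamma beta : R) (s : 'I_n -> R)
    (team : 'I_n -> seq R) (KA : R) : R :=
  \sum_(i < n) team_output A alpha c0 gamma beta (s i) (team i) KA.

End Model.

(* Main.v *)
Require Import Defs.
From mathcomp Require Import all_boot all_order all_algebra.
From mathcomp Require Import all_classical all_reals all_analysis.
Import Order.TTheory GRing.Theory Num.Theory.
Local Open Scope ring_scope.

Section H.
Variable R : realType.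

Lemma der_mulc (f : R -> R) (k x d : R) : is_derive x 1 f d ->
  is_derive x 1 (fun y => k * f y) (k * d).
Proof. move=> h; exact: (is_deriveZ k h). Qed.

Lemma der_addc (f : R -> R) (k x d : R) : is_derive x 1 f d ->
  is_derive x 1 (fun y => k + f y) d.
Proof. move=> h; have := is_deriveD (is_derive_cst k x 1) h; by rewrite add0r. Qed.

Lemma der_mulrc (f : R -> R) (k x d : R) : is_derive x 1 f d ->
  is_derive x 1 (fun y => f y * k) (d * k).
Proof. move=> h; have := @der_mulc f k x d h. rewrite mulrC.
  by have -> : (fun y => k * f y) = (fun y => f y * k) by apply: funext => y; rewrite mulrC. Qed.

Lemma der_id (x : R) : is_derive x 1 (fun y : R => y) 1.
Proof. exact: is_derive_id. Qed.

Lemma der_inv (f : R -> R) (x d : R) : f x != 0 -> is_derive x 1 f d ->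
  is_derive x 1 (fun y => (f y)^-1) (- (f x) ^- 2 * d).
Proof. move=> h1 h2; exact: is_deriveV. Qed.

Lemma der_pow (f : R -> R) (a x d : R) : 0 < f x -> is_derive x 1 f d ->
  is_derive x 1 (fun y => f y `^ a) (a * f x `^ (a - 1) * d).
Proof. move=> h1 h2. have := is_derive1_comp (is_derive1_powR a h1) h2. done. Qed.

End H.
Arguments der_mulc {R f} k {x d}.
Arguments der_addc {R f} k {x d}.
Arguments der_mulrc {R f} k {x d}.
Arguments der_inv {R f x d}.
Arguments der_pow {R f} a {x d}.

Section H2.
Variable R : realType.

Lemma sum_pos (t : seq R) : all (fun q => 0 < q) t -> t != [::] -> 0 < \sum_(q <- t) q.
Proof.
elim: t => [//|q t IH] /= /andP[hq ht] _.
rewrite big_cons; case: t IH ht => [|q' t'] IH ht; first by rewrite big_nil addr0.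
by rewrite addr_gt0 // IH.
Qed.

Lemma team_der (A alpha c0 gamma beta si : R) (t : seq R) (KA : R) :
  0 < si -> 0 < A -> 0 < alpha -> 0 < c0 -> 0 < gamma ->
  all (fun q => 0 < q) t -> 0 <= KA ->
  exists d, is_derive KA 1 (team_output A alpha c0 gamma beta si t) d /\
    0 <= d /\ (t != [::] -> 0 < d).
Proof.
move=> hs hA ha hc hg ht hK.
have [->|tne] := eqVneq t [::].
  exists 0; split; last by split.
  have -> : team_output A alpha c0 gamma beta si [::] = cst 0.
    apply: funext => y; rewrite /team_output /eff_labor /team_skill big_nil mul0r.
    by rewrite powR0 ?mulr0 // gt_eqF.
  exact: is_derive_cst.
set p := si `^ beta.
have hp : 0 < p by rewrite powR_gt0.
set Q := team_skill t.
have hQ : 0 < Q by apply: sum_pos.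
set m := team_size t.
have hm : 0 < m by rewrite /m /team_size ltr0n; case: t tne {ht Q hQ m}.
set D := fun y => 1 + gamma * y * p.
have hD : 0 < D KA by rewrite /D ltr_wpDr // !mulr_ge0 // ltW.
have dD : is_derive KA 1 D (gamma * 1 * p).
  have h1 := der_mulc gamma (@der_id R KA). have h2 := der_mulrc p h1. have h3 := der_addc 1 h2. exact h3.
set c := fun y => c0 * (D y)^-1.
have dc := der_mulc c0 (der_inv (lt0r_neq0 hD) dD).
have hc' : 0 < c KA by rewrite /c mulr_gt0 // invr_gt0.
set E := fun y => 1 + c y * m.
have dE := der_addc 1 (der_mulrc m dc).
have hE : 0 < E KA by rewrite /E ltr_wpDr // mulr_ge0 // ltW.
set L := fun y => Q * (E y)^-1.
have dL := der_mulc Q (der_inv (lt0r_neq0 hE) dE).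
have hL : 0 < L KA by rewrite /L mulr_gt0 // invr_gt0.
have dF := der_mulc A (der_pow alpha hL dL).
eexists; split; first exact: dF.
suff H : 0 < A * (alpha * L KA `^ (alpha - 1) *
   (Q * (- E KA ^- 2 * (c0 * (- D KA ^- 2 * (gamma * 1 * p)) * m)))).
  by split => //; apply: ltW.
rewrite mulr1 !(mulNr, mulrN) opprK.
by rewrite !mulr_gt0 // ?powR_gt0 // ?invr_gt0 ?exprn_gt0.
Qed.
End H2.

Theorem proposition1 (R : realType) (n : nat) (s : 'I_n -> R)
    (A alpha c0 gamma beta : R) (team : 'I_n -> seq R) :
  (forall i, 0 < s i <= 1) ->
  0 < A -> 0 < alpha < 1 -> 0 < c0 -> 0 < gamma -> 0 <= beta ->
  (forall i, all (fun q => 0 < q) (team i)) ->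
  (exists i, team i != [::]) ->
  forall KA : R, 0 <= KA ->
    derivable (firm_output A alpha c0 gamma beta s team) KA 1 /\
    0 < derive1 (firm_output A alpha c0 gamma beta s team) KA.
Proof.
move=> hs hA /andP[ha _] hc hg hb ht [i0 hi0] KA hK.
set h := fun i => team_output A alpha c0 gamma beta (s i) (team i).
have hf : firm_output A alpha c0 gamma beta s team = \sum_(i < n) h i.
  by rewrite fct_sumE.
have Hi : forall i, is_derive KA 1 (h i) ('D_1 (h i) KA) /\
    0 <= 'D_1 (h i) KA /\ (team i != [::] -> 0 < 'D_1 (h i) KA).
  move=> i; have [/andP[hsi _]] := (hs i, ht i) => hti.
  have [d [dd [d0 d1]]] := @team_der R A alpha c0 gamma beta (s i) (team i) KA hsi hA ha hc hg hti hK.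
  have E : 'D_1 (h i) KA = d by case: dd.
  by rewrite E.
have hd : is_derive KA 1 (\sum_(i < n) h i) (\sum_(i < n) 'D_1 (h i) KA).
  by apply: is_derive_sum => i; case: (Hi i).
rewrite hf; split; first by case: hd.
rewrite derive1E derive_val (bigD1 i0) //=.
apply: ltr_wpDr; last by case: (Hi i0) => _ [_]; apply.
by apply: sumr_ge0 => i _; case: (Hi i) => _ [].
Qed.
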